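(* There exist $\alpha_0>0$ and a function $C_2(\alpha)$, polylogarithmic in $1/\alpha$, such that for every $0<\alpha\le\alpha_0$ the following holds. Let $G=(V,E)$ be a graph, $\mathcal T$ a hierarchy of $G$, $h>0$, $X\in\{0,1\}^{h\times V}$ and $U\in\mathbb R^{E\times h}$ semiorthogonal. If a non-root node $t$ is $\alpha$-bad, then there is a $2$-homogeneous set $\mathcal O'(t)\subseteq\mathcal O(t)$ that is $1/C_2(\alpha)$-dominating.
   Context: Graphs are finite, undirected, unweighted, loopless, possibly with parallel edges; each edge $e=\{u,v\}$ has a fixed orientation $u\to v$. $U\in\mathbb R^{E\times h}$ is semiorthogonal if $UU^\intercal=I$; $U^e$ is its row indexed by $e$. $X_v$ is the column of $X$ indexed by $v$, and $X_e=X_u-X_v$. A hierarchy of $G$ is a rooted tree $\mathcal T$ in which every non-leaf node has at least two children and whose leaves are in bijection with $V$; $V(t)$ is the set of vertices at the leaves of the subtree of $t$; for non-root $t$ with parent $t^*$, $\mathcal O(t)$ is the multiset of edges between $V(t)$ and $V(t^* )\setminus V(t)$. A non-root node $t$ is $\alpha$-bad if $\big(\frac1{|\mathcal O(t)|}\sum_{e\in\mathcal O(t)}\langle U^e,X_e\rangle\big)^2\ge\alpha\cdot\frac1{|\mathcal O(t)|}\sum_{e\in\mathcal O(t)}\|X_e\|_2^2$. A set $F$ of edges is $c$-homogeneous if for all $e,f\in F$: $\langle U^e,X_e\rangle^2/\langle U^f,X_f\rangle^2<c$ and $\|X_e\|_2^2/\|X_f\|_2^2<c$ (all quantities nonzero).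 A set $\mathcal O'(t)\subseteq\mathcal O(t)$ is $\gamma$-dominating if $\big(\sum_{e\in\mathcal O'(t)}\langle U^e,X_e\rangle\big)^2\ge\gamma\big(\sum_{e\in\mathcal O(t)}\langle U^e,X_e\rangle\big)^2$. *)

(* Defs.v *)
From Stdlib Require Import Reals Lra List Arith Permutation.
Import ListNotations.
Open Scope R_scope.

Definition lsum (f : nat -> R) (l : list nat) : R := fold_right Rplus 0 (map f l).

(* Graph: vertices are 0..n-1; edges are a list of ordered pairs (u,v),
   the pair giving the fixed orientation u -> v.  Edge e is the e-th entry
   of the list, so parallel edges are allowed. *)
Definition graph_ok (n : nat) (E : list (nat * nat)) : Prop :=
  forall e, (e < length E)%nat ->
    let (u, v) := nth e E (0%nat, 0%nat) in (u < n)%nat /\ (v < n)%nat /\ u <> v.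

(* Hierarchy: rooted tree whose leaves are labelled by vertices. *)
Inductive hier : Type :=
| Leaf : nat -> hier
| Node : list hier -> hier.

Fixpoint leaves (t : hier) : list nat :=
  match t with
  | Leaf v => [v]
  | Node cs => (fix go (l : list hier) : list nat :=
                  match l with [] => [] | c :: l' => leaves c ++ go l' end) cs
  end.

Inductive wf_hier : hier -> Prop :=
| wf_leaf v : wf_hier (Leaf v)
| wf_node cs : (2 <= length cs)%nat -> Forall wf_hier cs -> wf_hier (Node cs).

Definition is_hierarchy (n : nat) (T : hier) : Prop :=
  wf_hier T /\ Permutation (leaves T) (seq 0 n).

Inductive subnode : hier -> hier -> Prop :=
| sub_refl t : subnode t t
| sub_child t cs c : In c cs -> subnode t c -> subnode t (Node cs).

Definition has_parent (T t p : hier) : Prop :=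
  subnode p T /\ exists cs, p = Node cs /\ In t cs.

Definition inb (x : nat) (l : list nat) : bool := existsb (Nat.eqb x) l.

(* O(t): indices of edges between V(t) and V(t^* ) \ V(t) (as a list; multiset
   of edges since parallel edges have distinct indices) *)
Definition crossing (Vt Vp : list nat) (uv : nat * nat) : bool :=
  let (u, v) := uv in
  (inb u Vt && inb v Vp && negb (inb v Vt)) ||
  (inb v Vt && inb u Vp && negb (inb u Vt)).

Definition Oset (E : list (nat * nat)) (t p : hier) : list nat :=
  filter (fun e => crossing (leaves t) (leaves p) (nth e E (0%nat, 0%nat)))
         (seq 0 (length E)).

Definition Xe (X : nat -> nat -> R) (E : list (nat * nat)) (e i : nat) : R :=
  let (u, v) := nth e E (0%nat, 0%nat) in X i u - X i v.

Definition ipe (h : nat) (U X : nat -> nat -> R) (E : list (nat * nat)) (e : nat) : R :=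
  lsum (fun i => U e i * Xe X E e i) (seq 0 h).

Definition nsqe (h : nat) (X : nat -> nat -> R) (E : list (nat * nat)) (e : nat) : R :=
  lsum (fun i => (Xe X E e i) ^ 2) (seq 0 h).

Definition binary_matrix (h n : nat) (X : nat -> nat -> R) : Prop :=
  forall i v, (i < h)%nat -> (v < n)%nat -> X i v = 0 \/ X i v = 1.

Definition semiorthogonal (m h : nat) (U : nat -> nat -> R) : Prop :=
  forall e f, (e < m)%nat -> (f < m)%nat ->
    lsum (fun i => U e i * U f i) (seq 0 h) = if Nat.eqb e f then 1 else 0.

Definition bad (alpha : R) (h : nat) (U X : nat -> nat -> R) (E : list (nat * nat))
  (t p : hier) : Prop :=
  let O := Oset E t p in
  (/ INR (length O) * lsum (ipe h U X E) O) ^ 2 >=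
  alpha * (/ INR (length O) * lsum (nsqe h X E) O).

Definition homogeneous (c : R) (h : nat) (U X : nat -> nat -> R) (E : list (nat * nat))
  (F : list nat) : Prop :=
  forall e f, In e F -> In f F ->
    ipe h U X E e <> 0 /\ ipe h U X E f <> 0 /\
    nsqe h X E e <> 0 /\ nsqe h X E f <> 0 /\
    (ipe h U X E e) ^ 2 / (ipe h U X E f) ^ 2 < c /\
    nsqe h X E e / nsqe h X E f < c.

Definition dominating (gamma : R) (h : nat) (U X : nat -> nat -> R)
  (E : list (nat * nat)) (O' O : list nat) : Prop :=
  (lsum (ipe h U X E) O') ^ 2 >= gamma * (lsum (ipe h U X E) O) ^ 2.

Definition polylog_on (alpha0 : R) (C : R -> R) : Prop :=
  exists (c : R) (k : nat), forall alpha, 0 < alpha <= alpha0 ->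
    0 < C alpha /\ C alpha <= c * (1 + ln (/ alpha)) ^ k.

(* Main.v *)
Require Import Defs.
From Stdlib Require Import Reals List Lra Lia Psatz Arith ZArith Bool.
Open Scope bool_scope.
Import ListNotations.
Open Scope R_scope.

Definition gsum {A} (g : A -> R) (l : list A) : R := fold_right Rplus 0 (map g l).

Lemma gsum_cons {A} (g : A -> R) x l : gsum g (x :: l) = g x + gsum g l.
Proof. reflexivity. Qed.
Lemma gsum_nil {A} (g : A -> R) : gsum g [] = 0.
Proof. reflexivity. Qed.
Lemma lsum_g f l : lsum f l = gsum f l.
Proof. reflexivity. Qed.

Lemma gsum_le {A} (f g : A -> R) l :
  (forall x, In x l -> f x <= g x) -> gsum f l <= gsum g l.
Proof.
  induction l as [|x l IH]; intros H; [rewrite !gsum_nil; lra|].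
  rewrite !gsum_cons.
  assert (f x <= g x) by (apply H; left; auto).
  assert (gsum f l <= gsum g l) by (apply IH; intros; apply H; right; auto).
  lra.
Qed.

Lemma gsum_ext {A} (f g : A -> R) l :
  (forall x, f x = g x) -> gsum f l = gsum g l.
Proof.
  intros H; induction l as [|x l IH]; [reflexivity|].
  rewrite !gsum_cons, IH, H; reflexivity.
Qed.

Lemma gsum_plus {A} (f g : A -> R) l :
  gsum (fun x => f x + g x) l = gsum f l + gsum g l.
Proof.
  induction l as [|x l IH]; [rewrite !gsum_nil; lra|].
  rewrite !gsum_cons, IH; ring.
Qed.

Lemma gsum_scal {A} (c : R) (f : A -> R) l :
  gsum (fun x => c * f x) l = c * gsum f l.
Proof.
  induction l as [|x l IH]; [rewrite !gsum_nil; ring|].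
  rewrite !gsum_cons, IH; ring.
Qed.

Lemma gsum_opp {A} (f : A -> R) l :
  gsum (fun x => - f x) l = - gsum f l.
Proof.
  induction l as [|x l IH]; [rewrite !gsum_nil; ring|].
  rewrite !gsum_cons, IH; ring.
Qed.

Lemma gsum_affine {A} (c0 c : R) (f : A -> R) l :
  gsum (fun x => c0 + c * f x) l = INR (length l) * c0 + c * gsum f l.
Proof.
  induction l as [|x l IH]; [rewrite !gsum_nil; simpl; ring|].
  rewrite !gsum_cons, IH. simpl length. rewrite S_INR. ring.
Qed.

Lemma gsum_nonneg {A} (f : A -> R) l :
  (forall x, In x l -> 0 <= f x) -> 0 <= gsum f l.
Proof.
  intros H. apply Rle_trans with (gsum (fun _ => 0) l).
  - induction l as [|x l IH]; [rewrite gsum_nil; lra|].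
    rewrite gsum_cons. assert (0 <= gsum (fun _ : A => 0) l) by (apply IH; intros; apply H; right; auto). lra.
  - apply gsum_le; auto.
Qed.

Lemma gsum_ge_elem {A} (f : A -> R) l x :
  (forall y, In y l -> 0 <= f y) -> In x l -> f x <= gsum f l.
Proof.
  induction l as [|y l IH]; intros H Hx; [destruct Hx|].
  rewrite gsum_cons. destruct Hx as [<-|Hx].
  - assert (0 <= gsum f l) by (apply gsum_nonneg; intros; apply H; right; auto). lra.
  - assert (f x <= gsum f l) by (apply IH; auto; intros; apply H; right; auto).
    assert (0 <= f y) by (apply H; left; auto). lra.
Qed.

Lemma gsum_pos_ex {A} (f : A -> R) l :
  0 < gsum f l -> exists x, In x l /\ 0 < f x.
Proof.
  induction l as [|y l IH]; intros H; [rewrite gsum_nil in H; lra|].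
  rewrite gsum_cons in H. destruct (Rlt_dec 0 (f y)) as [Hy|Hy].
  - exists y; split; [left|]; auto.
  - destruct IH as [x [Hx Hfx]]; [lra|]. exists x; split; [right|]; auto.
Qed.

Lemma gsum_filter {A} (f : A -> R) (P : A -> bool) l :
  gsum f l = gsum f (filter P l) + gsum f (filter (fun x => negb (P x)) l).
Proof.
  induction l as [|x l IH]; [simpl; rewrite gsum_nil; ring|].
  simpl. destruct (P x); simpl; rewrite !gsum_cons, IH; ring.
Qed.

Lemma gsum_filter_le {A} (f : A -> R) (P : A -> bool) l :
  (forall x, In x l -> 0 <= f x) -> gsum f (filter P l) <= gsum f l.
Proof.
  intros H. pose proof (gsum_filter f P l) as Hs.
  assert (0 <= gsum f (filter (fun x => negb (P x)) l)).
  { apply gsum_nonneg. intros x Hx. apply filter_In in Hx. apply H; tauto. }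
  lra.
Qed.

Lemma cover (f : nat -> R) (l : list nat) (Ps : list (nat -> bool)) :
  (forall e, In e l -> 0 <= f e) ->
  (forall e, In e l -> exists P, In P Ps /\ P e = true) ->
  gsum f l <= gsum (fun P => gsum f (filter P l)) Ps.
Proof.
  induction l as [|e l IH]; intros H1 H2.
  - rewrite gsum_nil. apply gsum_nonneg. intros. simpl. rewrite gsum_nil; lra.
  - rewrite gsum_cons.
    rewrite (gsum_ext (fun P : nat -> bool => gsum f (filter P (e :: l)))
                      (fun P : nat -> bool => (if P e then f e else 0) + gsum f (filter P l))).
    2:{ intros P. simpl. destruct (P e); rewrite ?gsum_cons; ring. }
    rewrite gsum_plus.
    assert (gsum f l <= gsum (fun P => gsum f (filter P l)) Ps).
    { apply IH; intros; [apply H1|apply H2]; right; auto. }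
    destruct (H2 e (or_introl eq_refl)) as [P0 [HP0 HP0e]].
    assert (He : 0 <= f e) by (apply H1; left; auto).
    assert ((if P0 e then f e else 0) <= gsum (fun P : nat -> bool => if P e then f e else 0) Ps).
    { apply (gsum_ge_elem (fun P : nat -> bool => if P e then f e else 0)); auto.
      intros P _. destruct (P e); lra. }
    rewrite HP0e in H0. lra.
Qed.

Lemma exists_ge_avg {A} (g : A -> R) Ps :
  Ps <> [] -> exists P, In P Ps /\ gsum g Ps <= INR (length Ps) * g P.
Proof.
  induction Ps as [|x Ps IH]; intros Hne; [congruence|].
  destruct Ps as [|y Ps'].
  - exists x. split; [left; auto|]. rewrite gsum_cons, gsum_nil. simpl. lra.
  - destruct IH as [P [HP Hle]]; [congruence|].
    set (k := INR (length (y :: Ps'))) in *.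
    assert (Hk : 0 <= k) by apply pos_INR.
    replace (INR (length (x :: y :: Ps'))) with (k + 1)
      by (unfold k; simpl length; rewrite (S_INR (S _)); ring).
    rewrite gsum_cons.
    destruct (Rle_dec (g P) (g x)).
    + exists x. split; [left; auto|]. nra.
    + exists P. split; [right; auto|]. nra.
Qed.

Lemma dyadic L x J : 0 < L -> L < x -> x <= L * 2 ^ J ->
  exists i, (i < J)%nat /\ L * 2 ^ i < x /\ x <= L * 2 ^ (S i).
Proof.
  intros HL Hx. induction J as [|J IH]; intros HJ.
  - simpl in HJ. lra.
  - destruct (Rle_dec x (L * 2 ^ J)) as [H|H].
    + destruct (IH H) as [i [Hi Hb]]. exists i. split; [lia|auto].
    + exists J. split; [lia|]. split; lra.
Qed.

Lemma cs (u x : nat -> R) l :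
  gsum (fun i => u i * u i) l = 1 ->
  (gsum (fun i => u i * x i) l) ^ 2 <= gsum (fun i => x i ^ 2) l.
Proof.
  intros Hu. set (s := gsum (fun i => u i * x i) l).
  assert (H0 : 0 <= gsum (fun i => (x i - s * u i) ^ 2) l).
  { apply gsum_nonneg. intros. apply pow2_ge_0. }
  rewrite (gsum_ext _ (fun i => (x i ^ 2 + (- (2 * s)) * (u i * x i)) + s ^ 2 * (u i * u i))) in H0
    by (intros; ring).
  rewrite gsum_plus, gsum_plus, !gsum_scal, Hu in H0.
  fold s in H0. nra.
Qed.

Definition Jn (al : R) : nat := Z.to_nat (up (ln (256 / al ^ 2) / ln 2)).
Definition C2f (al : R) : R := 16 * (INR (Jn al)) ^ 4.

Lemma ln2_pos : / 2 < ln 2.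
Proof. exact ln_lt_2. Qed.

Lemma lnu_nonneg al : 0 < al <= 1 -> 0 <= ln (/ al).
Proof.
  intros H. assert (Hi : 1 <= / al).
  { rewrite <- Rinv_1. apply Rinv_le_contravar; lra. }
  destruct (Req_dec (/ al) 1) as [E|E].
  - rewrite E, ln_1; lra.
  - rewrite <- ln_1. left. apply ln_increasing; lra.
Qed.

Lemma ln256 al : 0 < al -> ln (256 / al ^ 2) = 8 * ln 2 + 2 * ln (/ al).
Proof.
  intros H.
  replace (256 / al ^ 2) with (2 ^ 8 * (/ al) ^ 2) by (field; lra).
  rewrite ln_mult; [| apply pow_lt; lra | apply pow_lt; apply Rinv_0_lt_compat; lra].
  rewrite !ln_pow; [| apply Rinv_0_lt_compat; lra | lra]. simpl INR. ring.
Qed.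

Lemma Jn_INR al : 0 < al <= 1 ->
  INR (Jn al) = IZR (up (ln (256 / al ^ 2) / ln 2)) /\
  ln (256 / al ^ 2) / ln 2 < INR (Jn al) /\
  INR (Jn al) <= ln (256 / al ^ 2) / ln 2 + 1 /\
  8 <= ln (256 / al ^ 2) / ln 2.
Proof.
  intros H. pose proof ln2_pos. pose proof (lnu_nonneg al H).
  set (y := ln (256 / al ^ 2) / ln 2).
  assert (Hy : 8 <= y).
  { unfold y. rewrite ln256 by lra.
    replace ((8 * ln 2 + 2 * ln (/ al)) / ln 2) with (8 + 2 * ln (/ al) / ln 2) by (field; lra).
    assert (0 <= 2 * ln (/ al) / ln 2) by (unfold Rdiv; apply Rmult_le_pos; [lra|left; apply Rinv_0_lt_compat; lra]). lra. }
  destruct (archimed y) as [A1 A2].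
  assert (Hz : (0 <= up y)%Z) by (apply le_IZR; lra).
  assert (E : INR (Jn al) = IZR (up y)).
  { unfold Jn. fold y. rewrite INR_IZR_INZ, Z2Nat.id by exact Hz. reflexivity. }
  rewrite E. repeat split; try lra.
Qed.

Lemma Jn_spec al : 0 < al <= 1 -> 256 <= al ^ 2 * 2 ^ (Jn al) /\ 1 <= INR (Jn al).
Proof.
  intros H. destruct (Jn_INR al H) as [_ [H1 [_ H3]]].
  pose proof ln2_pos.
  split; [|lra].
  rewrite <- (Rpower_pow (Jn al) 2) by lra. unfold Rpower.
  assert (He : 256 / al ^ 2 <= exp (INR (Jn al) * ln 2)).
  { rewrite <- (exp_ln (256 / al ^ 2)) by (apply Rdiv_lt_0_compat; [lra|apply pow_lt; lra]).
    left. apply exp_increasing.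
    apply Rmult_lt_compat_r with (r := ln 2) in H1; [|lra].
    replace (ln (256 / al ^ 2) / ln 2 * ln 2) with (ln (256 / al ^ 2)) in H1 by (field; lra).
    lra. }
  assert (Ha : 0 < al ^ 2) by (apply pow_lt; lra).
  apply Rmult_le_compat_l with (r := al ^ 2) in He; [|lra].
  replace (al ^ 2 * (256 / al ^ 2)) with 256 in He by (field; lra). exact He.
Qed.

Lemma Jn_bound al : 0 < al <= 1 -> INR (Jn al) <= 9 * (1 + ln (/ al)).
Proof.
  intros H. destruct (Jn_INR al H) as [_ [_ [H2 _]]].
  pose proof ln2_pos. pose proof (lnu_nonneg al H).
  rewrite ln256 in H2 by lra.
  replace ((8 * ln 2 + 2 * ln (/ al)) / ln 2) with (8 + 2 * ln (/ al) / ln 2) in H2 by (field; lra).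
  assert (2 * ln (/ al) / ln 2 <= 4 * ln (/ al)).
  { apply Rmult_le_reg_r with (r := ln 2); [lra|].
    replace (2 * ln (/ al) / ln 2 * ln 2) with (2 * ln (/ al)) by (field; lra). nra. }
  lra.
Qed.

Lemma C2f_pos al : 0 < al <= 1 -> 0 < C2f al.
Proof.
  intros H. destruct (Jn_spec al H) as [_ H1]. unfold C2f.
  assert (0 < INR (Jn al) ^ 4) by (apply pow_lt; lra). lra.
Qed.

Lemma C2f_bound al : 0 < al <= 1 -> C2f al <= 16 * 9 ^ 4 * (1 + ln (/ al)) ^ 4.
Proof.
  intros H. destruct (Jn_spec al H) as [_ H1]. pose proof (Jn_bound al H). unfold C2f.
  rewrite Rmult_assoc, <- Rpow_mult_distr.
  apply Rmult_le_compat_l; [lra|]. apply pow_incr. lra.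
Qed.
Definition Rltb (x y : R) : bool := if Rlt_dec x y then true else false.
Definition Rleb (x y : R) : bool := if Rle_dec x y then true else false.
Lemma Rltb_true x y : Rltb x y = true <-> x < y.
Proof. unfold Rltb; destruct (Rlt_dec x y); split; intros; auto; discriminate || contradiction. Qed.
Lemma Rleb_true x y : Rleb x y = true <-> x <= y.
Proof. unfold Rleb; destruct (Rle_dec x y); split; intros; auto; discriminate || contradiction. Qed.

Definition inI (L : R) (i : nat) (x : R) : bool := Rltb (L * 2 ^ i) x && Rleb x (L * 2 ^ (S i)).

Lemma ratio_lt2 x y L : 0 < y -> x <= 2 * L -> L < y -> x / y < 2.
Proof.
  intros Hy Hx HL. assert (E : x / y * y = x) by (field; lra). nra.
Qed.

Lemma core (al : R) (l : list nat) (a b : nat -> R) :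
  0 < al <= 1 -> NoDup l ->
  (forall e, In e l -> a e ^ 2 <= b e) ->
  0 < lsum a l ->
  (/ INR (length l) * lsum a l) ^ 2 >= al * (/ INR (length l) * lsum b l) ->
  exists F, NoDup F /\ incl F l /\
    (forall e f, In e F -> In f F ->
       0 < a e /\ 0 < b e /\ a e ^ 2 / a f ^ 2 < 2 /\ b e / b f < 2) /\
    lsum a F ^ 2 >= / C2f al * lsum a l ^ 2.
Proof.
  intros Hal Hnd Hab HS Hbad.
  change (lsum a l) with (gsum a l) in HS, Hbad. change (lsum b l) with (gsum b l) in Hbad.
  assert (Hb0 : forall e, In e l -> 0 <= b e) by (intros e He; specialize (Hab e He); nra).
  destruct (gsum_pos_ex a l HS) as [e0 [He0 Ha0]].
  assert (HN : 0 < INR (length l)).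
  { destruct l as [|x l']; [destruct He0|]. simpl length; rewrite S_INR; pose proof (pos_INR (length l')); lra. }
  set (S0 := gsum a l) in *.
  set (B := gsum b l) in *.
  assert (HB : 0 < B).
  { pose proof (gsum_ge_elem b l e0 Hb0 He0). pose proof (Hab e0 He0). fold B in H. nra. }
  set (N := INR (length l)) in *.
  set (A := S0 / N).
  assert (HA : 0 < A) by (unfold A; apply Rdiv_lt_0_compat; lra).
  assert (HSA : S0 = N * A) by (unfold A; field; lra).
  assert (HBA : al * B <= N * A ^ 2).
  { replace (/ N * S0) with A in Hbad by (unfold A; field; lra).
    apply Rge_le in Hbad.
    apply Rmult_le_compat_l with (r := N) in Hbad; [|lra].
    replace (N * (al * (/ N * B))) with (al * B) in Hbad by (field; lra). lra. }
  set (goodb := fun e => Rltb (A / 4) (a e) && Rleb (a e) (4 * A / al) && Rleb (al * N * b e) (16 * B)).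
  set (c := al / (4 * A) + A * N / (4 * B)).
  assert (Hc1 : 0 <= al / (4 * A)) by (unfold Rdiv; apply Rmult_le_pos; [lra|left; apply Rinv_0_lt_compat; lra]).
  assert (Hc2 : 0 <= A * N / (4 * B)) by (unfold Rdiv; apply Rmult_le_pos; [nra|left; apply Rinv_0_lt_compat; lra]).
  assert (Hbadpart : gsum a (filter (fun e => negb (goodb e)) l) <= 3 / 4 * S0).
  { apply Rle_trans with (gsum (fun e => A / 4 + c * b e) (filter (fun e => negb (goodb e)) l)).
    - apply gsum_le. intros e He. apply filter_In in He. destruct He as [He Hg].
      assert (Hbe := Hb0 e He). assert (Habe := Hab e He).
      destruct (Rle_dec (a e) (A / 4)) as [H1|H1].
      { unfold c. nra. }
      destruct (Rle_dec (a e) (4 * A / al)) as [H2|H2].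
      + unfold goodb in Hg.
        rewrite (proj2 (Rltb_true _ _) (Rnot_le_lt _ _ H1)), (proj2 (Rleb_true _ _) H2) in Hg.
        simpl in Hg. unfold Rleb in Hg.
        destruct (Rle_dec (al * N * b e) (16 * B)) as [_|H3]; [discriminate|].
        apply Rnot_le_lt in H3.
        assert (E1 : A * N / (4 * B) * b e = (A / (4 * B * al)) * (al * N * b e)) by (field; lra).
        assert (E2 : (A / (4 * B * al)) * (16 * B) = 4 * A / al) by (field; lra).
        assert (Hp : 0 < A / (4 * B * al)) by (apply Rdiv_lt_0_compat; nra).
        assert (A / (4 * B * al) * (16 * B) < A / (4 * B * al) * (al * N * b e))
          by (apply Rmult_lt_compat_l; lra).
        unfold c. nra.
      + apply Rnot_le_lt in H2.
        assert (E1 : al / (4 * A) * (4 * A / al) = 1) by (field; lra).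
        assert (Hp : 0 < al / (4 * A)) by (apply Rdiv_lt_0_compat; lra).
        assert (H4 : a e * (4 * A / al) <= a e ^ 2) by nra.
        assert (al / (4 * A) * (a e * (4 * A / al)) <= al / (4 * A) * b e)
          by (apply Rmult_le_compat_l; lra).
        unfold c. nra.
    - apply Rle_trans with (gsum (fun e => A / 4 + c * b e) l).
      + apply gsum_filter_le. intros e He. pose proof (Hb0 e He). unfold c. nra.
      + rewrite gsum_affine. fold N B.
        assert (E : c * B = al * B / (4 * A) + A * N / 4) by (unfold c; field; lra).
        assert (E2 : al * B / (4 * A) = (al * B) * / (4 * A)) by reflexivity.
        assert (E3 : N * A / 4 = (N * A ^ 2) * / (4 * A)) by (field; lra).
        assert ((al * B) * / (4 * A) <= (N * A ^ 2) * / (4 * A))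
          by (apply Rmult_le_compat_r; [left; apply Rinv_0_lt_compat; lra|lra]).
        lra. }
  set (lg := filter goodb l).
  assert (Hgood : S0 / 4 <= gsum a lg).
  { pose proof (gsum_filter a goodb l) as E. fold S0 lg in E. lra. }
  assert (Hgood_e : forall e, In e lg ->
            A / 4 < a e /\ a e <= 4 * A / al /\ al * N * b e <= 16 * B /\ In e l).
  { intros e He. unfold lg in He. apply filter_In in He. destruct He as [He Hg].
    unfold goodb in Hg. apply andb_prop in Hg. destruct Hg as [Hg H3]. apply andb_prop in Hg.
    destruct Hg as [H1 H2].
    apply Rltb_true in H1. apply Rleb_true in H2. apply Rleb_true in H3. tauto. }
  set (J := Jn al).
  destruct (Jn_spec al Hal) as [HJ HJ1]. fold J in HJ, HJ1.
  set (L := A ^ 2 / 16).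
  assert (HL : 0 < L) by (unfold L; apply Rdiv_lt_0_compat; [apply pow_lt|]; lra).
  assert (HLJ : (4 * A / al) ^ 2 <= L * 2 ^ J).
  { assert (E : (4 * A / al) ^ 2 = L * (256 / al ^ 2)) by (unfold L; field; lra).
    rewrite E. apply Rmult_le_compat_l; [lra|].
    assert (Ha2 : 0 < al ^ 2) by (apply pow_lt; lra).
    apply Rmult_le_reg_l with (r := al ^ 2); [lra|].
    replace (al ^ 2 * (256 / al ^ 2)) with 256 by (field; lra). lra. }
  set (Ps := map (fun ij : nat * nat => fun e => inI L (fst ij) (a e ^ 2) && inI L (snd ij) (b e))
                 (list_prod (seq 0 J) (seq 0 J))).
  assert (Hcov : gsum a lg <= gsum (fun P => gsum a (filter P lg)) Ps).
  { apply cover.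
    - intros e He. destruct (Hgood_e e He) as [H1 _]. lra.
    - intros e He. destruct (Hgood_e e He) as [H1 [H2 [H3 H4]]].
      assert (Habe := Hab e H4).
      assert (Hx1 : L < a e ^ 2) by (unfold L; nra).
      assert (Hx2 : a e ^ 2 <= L * 2 ^ J).
      { apply Rle_trans with ((4 * A / al) ^ 2); [|lra]. apply pow_incr; lra. }
      assert (Hy2 : b e <= (4 * A / al) ^ 2).
      { assert (E : (4 * A / al) ^ 2 = (16 * A ^ 2) / al ^ 2) by (field; lra).
        rewrite E. assert (Ha2 : 0 < al ^ 2) by (apply pow_lt; lra).
        apply Rmult_le_reg_l with (r := al ^ 2); [lra|].
        replace (al ^ 2 * (16 * A ^ 2 / al ^ 2)) with (16 * A ^ 2) by (field; lra).
        assert (al * (al * N * b e) <= al * (16 * B)) by (apply Rmult_le_compat_l; lra).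
        apply Rmult_le_reg_l with (r := N); [lra|]. nra. }
      destruct (dyadic L (a e ^ 2) J HL Hx1 Hx2) as [i [Hi [Hi1 Hi2]]].
      destruct (dyadic L (b e) J HL ltac:(lra) ltac:(lra)) as [j [Hj [Hj1 Hj2]]].
      exists (fun e => inI L i (a e ^ 2) && inI L j (b e)). split.
      + unfold Ps. apply in_map_iff. exists (i, j). split; [reflexivity|].
        apply in_prod; apply in_seq; lia.
      + unfold inI. rewrite (proj2 (Rltb_true _ _) Hi1), (proj2 (Rleb_true _ _) Hi2),
          (proj2 (Rltb_true _ _) Hj1), (proj2 (Rleb_true _ _) Hj2). reflexivity. }
  assert (HPs : Ps <> []).
  { intros E. assert (length Ps = 0%nat) by (rewrite E; reflexivity).
    unfold Ps in H. rewrite length_map, length_prod, length_seq in H.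
    assert (0 < J)%nat by (apply INR_lt; simpl; lra). nia. }
  destruct (exists_ge_avg (fun P => gsum a (filter P lg)) Ps HPs) as [P [HP HPle]].
  assert (HlenPs : INR (length Ps) = INR J * INR J).
  { unfold Ps. rewrite length_map, length_prod, length_seq, mult_INR. reflexivity. }
  unfold Ps in HP. apply in_map_iff in HP. destruct HP as [[i j] [HPdef Hij]].
  exists (filter P lg). split; [|split; [|split]].
  - unfold lg. apply NoDup_filter, NoDup_filter, Hnd.
  - intros e He. apply filter_In in He. destruct He as [He _]. exact (proj2 (proj2 (proj2 (Hgood_e e He)))).
  - assert (Hmem : forall e, In e (filter P lg) ->
       A / 4 < a e /\ inI L i (a e ^ 2) = true /\ inI L j (b e) = true).
    { intros e He. apply filter_In in He. destruct He as [He HPe].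
      rewrite <- HPdef in HPe. simpl in HPe. apply andb_prop in HPe.
      destruct (Hgood_e e He) as [H1 _]. tauto. }
    intros e f He Hf.
    destruct (Hmem e He) as [Hae [Hie Hje]]. destruct (Hmem f Hf) as [Haf [Hif Hjf]].
    unfold inI in Hie, Hje, Hif, Hjf.
    apply andb_prop in Hie, Hje, Hif, Hjf.
    destruct Hie as [Hie1 Hie2], Hje as [Hje1 Hje2], Hif as [Hif1 Hif2], Hjf as [Hjf1 Hjf2].
    apply Rltb_true in Hie1, Hje1, Hif1, Hjf1. apply Rleb_true in Hie2, Hje2, Hif2, Hjf2.
    simpl pow in Hie2, Hje2, Hif2, Hjf2.
    assert (0 < L * 2 ^ j) by (apply Rmult_lt_0_compat; [lra|apply pow_lt; lra]).
    assert (0 < L * 2 ^ i) by (apply Rmult_lt_0_compat; [lra|apply pow_lt; lra]).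
    split; [lra|]. split; [lra|]. split.
    + apply (ratio_lt2 _ _ (L * 2 ^ i)); nra.
    + apply (ratio_lt2 _ _ (L * 2 ^ j)); nra.
  - change (lsum a (filter P lg)) with (gsum a (filter P lg)). change (lsum a l) with S0.
    set (x := gsum a (filter P lg)) in *.
    rewrite HlenPs in HPle.
    set (K := INR J * INR J) in *.
    assert (HK : 1 <= K) by (unfold K; nra).
    assert (HKx : S0 / 4 <= K * x) by lra.
    assert (HC : C2f al = 16 * K ^ 2) by (unfold C2f, K; fold J; ring).
    assert (HCp : 0 < C2f al) by (apply C2f_pos; exact Hal).
    apply Rle_ge. apply Rmult_le_reg_l with (r := C2f al); [lra|].
    replace (C2f al * (/ C2f al * S0 ^ 2)) with (S0 ^ 2) by (field; lra).
    rewrite HC.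
    assert (0 < S0 / 4) by lra.
    assert ((S0 / 4) ^ 2 <= (K * x) ^ 2) by (apply pow_incr; lra).
    nra.
Qed.

Lemma lsum_opp f l : lsum (fun x => - f x) l = - lsum f l.
Proof. exact (gsum_opp f l). Qed.

Theorem mainTheorem18 :
  exists (alpha0 : R) (C2 : R -> R),
    0 < alpha0 /\ polylog_on alpha0 C2 /\
    forall (alpha : R), 0 < alpha <= alpha0 ->
    forall (n : nat) (E : list (nat * nat)) (T : hier) (h : nat)
           (X U : nat -> nat -> R) (t p : hier),
      graph_ok n E ->
      is_hierarchy n T ->
      (0 < h)%nat ->
      binary_matrix h n X ->
      semiorthogonal (length E) h U ->
      has_parent T t p ->
      bad alpha h U X E t p ->
      exists O' : list nat,
        NoDup O' /\ incl O' (Oset E t p) /\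
        homogeneous 2 h U X E O' /\
        dominating (/ C2 alpha) h U X E O' (Oset E t p).
Proof.
  exists 1, C2f. split; [lra|]. split.
  - exists (16 * 9 ^ 4), 4%nat. intros al Hal. split.
    + apply C2f_pos; exact Hal.
    + apply C2f_bound; exact Hal.
  - intros al Hal n E T h X U t p HG HT Hh HX HU Hpar Hbad.
    unfold bad in Hbad. cbv zeta in Hbad.
    set (O := Oset E t p) in *.
    assert (HndO : NoDup O) by (unfold O, Oset; apply NoDup_filter, seq_NoDup).
    assert (HcsO : forall e, In e O -> ipe h U X E e ^ 2 <= nsqe h X E e).
    { intros e He. unfold O, Oset in He. apply filter_In in He. destruct He as [He _].
      apply in_seq in He.
      pose proof (HU e e ltac:(lia) ltac:(lia)) as Hu. rewrite Nat.eqb_refl in Hu.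
      unfold ipe, nsqe. exact (cs (U e) (Xe X E e) (seq 0 h) Hu). }
    unfold dominating, homogeneous.
    destruct (Rtotal_order (lsum (ipe h U X E) O) 0) as [Hneg|[Hz|Hpos]].
    + destruct (core al O (fun e => - ipe h U X E e) (nsqe h X E) Hal HndO)
        as [F [HF1 [HF2 [HF3 HF4]]]].
      * intros e He. specialize (HcsO e He). nra.
      * rewrite lsum_opp. lra.
      * rewrite lsum_opp.
        replace ((/ INR (length O) * - lsum (ipe h U X E) O) ^ 2)
          with ((/ INR (length O) * lsum (ipe h U X E) O) ^ 2) by ring. exact Hbad.
      * exists F. split; [exact HF1|]. split; [exact HF2|]. split.
        -- intros e f He Hf. destruct (HF3 e f He Hf) as [H1 [H2 [H3 H4]]].
           destruct (HF3 f e Hf He) as [H1' [H2' _]].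
           replace (ipe h U X E e ^ 2) with ((- ipe h U X E e) ^ 2) by ring.
           replace (ipe h U X E f ^ 2) with ((- ipe h U X E f) ^ 2) by ring.
           repeat split; try lra.
        -- rewrite !lsum_opp in HF4.
           replace (lsum (ipe h U X E) F ^ 2) with ((- lsum (ipe h U X E) F) ^ 2) by ring.
           replace (lsum (ipe h U X E) O ^ 2) with ((- lsum (ipe h U X E) O) ^ 2) by ring.
           exact HF4.
    + exists []. split; [constructor|]. split; [intros x Hx; inversion Hx|]. split.
      * intros e f He; inversion He.
      * rewrite Hz. change (lsum (ipe h U X E) []) with 0. right. ring.
    + destruct (core al O (ipe h U X E) (nsqe h X E) Hal HndO HcsO Hpos Hbad)
        as [F [HF1 [HF2 [HF3 HF4]]]].
      exists F. split; [exact HF1|]. split; [exact HF2|]. split; [|exact HF4].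
      intros e f He Hf. destruct (HF3 e f He Hf) as [H1 [H2 [H3 H4]]].
      destruct (HF3 f e Hf He) as [H1' [H2' _]].
      repeat split; try lra.
Qed.
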